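(* Let $q$ be a real quadratic form on $\mathbb{R}^{1,3}$ (identified with the hermitian $2\times 2$ matrices as in the context), and let $Q$ be its symmetric $4\times 4$ matrix, $q(\mathbf{x})=\mathbf{x}^T Q\,\mathbf{x}$. Assume $Q$ is positive semidefinite and degenerate ($Q\ge 0$, $\dim\ker Q>0$). Assume $\ker Q$ contains a non-zero vector $\mathbf{n}=(n_0,\vec n)$ that is space-like or light-like, $\mathbf{n}\cdot\mathbf{n}=n_0^2-|\vec n|^2\le 0$. Define $f(\rho)=\sqrt{q(\mathbf{x})}$ for $\rho=\tfrac12(I+\vec x\cdot\vec\sigma)$ in the Bloch ball $\Omega$, with $\mathbf{x}=(1,\vec x)$. Then $f$ is a convex roof on $\Omega$. Equivalently, $$f(\rho)=\min\Big\{\sum_j p_j f(\pi_j)\ :\ \rho=\sum_j p_j\pi_j,\ \pi_j \text{ pure},\ p_j>0,\ \sum_j p_j=1\Big\}\qquad\text{for all }\rho\in\Omega.$$ Moreover, assume such an $\mathbf{n}$ can be chosen with $n_0=0$. Then the roof is flat: $\Omega$ is foliated into leaves, each the convex hull of some pure states, and $f$ is constant on each leaf.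
   Context: Hermitian $2\times2$ matrices are identified with Minkowski space $\mathbb{R}^{1,3}$ via $\mathbf{x}=(x_0,\vec x)\leftrightarrow \rho=\tfrac12(x_0 I+\vec x\cdot\vec\sigma)$, where $\vec\sigma$ are the Pauli matrices. The Minkowski product is $\mathbf{x}\cdot\mathbf{y}=x_0y_0-\vec x\cdot\vec y$. Under this identification $\det\rho=\tfrac14\mathbf{x}\cdot\mathbf{x}$ and $\mathrm{Tr}\rho=x_0$. The state space (Bloch ball) $\Omega$ is the set of $\mathbf{x}$ with $x_0=1$ and $|\vec x|\le 1$. Pure states are those with $|\vec x|=1$, i.e. the light-like vectors with $x_0=1$. A continuous function $f$ on $\Omega$ is a convex roof if it is convex and, for every $\rho\in\Omega$, there is a decomposition $\rho=\sum_j p_j\pi_j$ into pure states $\pi_j$ ($p_j>0$, $\sum p_j=1$) with $f(\rho)=\sum_j p_j f(\pi_j)$. The roof is flat if these decompositions can be chosen so that $f$ is constant on the convex hull of the $\pi_j$ occurring in each. *)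

(* Defs.v *)
From Stdlib Require Import Reals List.
Import ListNotations.
Open Scope R_scope.

Definition vec3 : Type := (R * R * R)%type.
Definition v1 (x : vec3) : R := fst (fst x).
Definition v2 (x : vec3) : R := snd (fst x).
Definition v3 (x : vec3) : R := snd x.
Definition norm2 (x : vec3) : R := v1 x * v1 x + v2 x * v2 x + v3 x * v3 x.
Definition vadd (x y : vec3) : vec3 := (v1 x + v1 y, v2 x + v2 y, v3 x + v3 y).
Definition vscale (t : R) (x : vec3) : vec3 := (t * v1 x, t * v2 x, t * v3 x).
Definition vzero : vec3 := (0, 0, 0).

(* State space Omega (Bloch ball), states rho = 1/2 (I + x.sigma) identified
   with their Bloch vector x; pure states are |x| = 1. *)
Definition in_Omega (x : vec3) : Prop := norm2 x <= 1.
Definition is_pure (x : vec3) : Prop := norm2 x = 1.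

(* Minkowski 4-vectors (x0,x1,x2,x3) as functions on indices 0..3 *)
Definition vec4 : Type := nat -> R.
Definition mk4 (a b c d : R) : vec4 :=
  fun i => match i with 0 => a | 1 => b | 2 => c | 3 => d | _ => 0 end.
Definition lift4 (x : vec3) : vec4 := mk4 1 (v1 x) (v2 x) (v3 x).
Definition minkowski (x y : vec4) : R := x 0%nat * y 0%nat - x 1%nat * y 1%nat
  - x 2%nat * y 2%nat - x 3%nat * y 3%nat.

Definition mat4 : Type := nat -> nat -> R.
Definition symmetric4 (Q : mat4) : Prop :=
  forall i j, (i < 4)%nat -> (j < 4)%nat -> Q i j = Q j i.
Definition qform (Q : mat4) (x : vec4) : R :=
  sum_f_R0 (fun i => sum_f_R0 (fun j => x i * Q i j * x j) 3) 3.
Definition matvec (Q : mat4) (x : vec4) (i : nat) : R :=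
  sum_f_R0 (fun j => Q i j * x j) 3.
Definition psd4 (Q : mat4) : Prop := forall x : vec4, 0 <= qform Q x.
Definition nonzero4 (x : vec4) : Prop := exists i, (i < 4)%nat /\ x i <> 0.
Definition in_kernel (Q : mat4) (x : vec4) : Prop :=
  forall i, (i < 4)%nat -> matvec Q x i = 0.
Definition degenerate4 (Q : mat4) : Prop := exists x, nonzero4 x /\ in_kernel Q x.

(* Decompositions into weighted states: list of (weight, Bloch vector) *)
Definition wsum (d : list (R * vec3)) : R := fold_right (fun pv s => fst pv + s) 0 d.
Definition bary (d : list (R * vec3)) : vec3 :=
  fold_right (fun pv s => vadd (vscale (fst pv) (snd pv)) s) vzero d.
Definition favg (f : vec3 -> R) (d : list (R * vec3)) : R :=
  fold_right (fun pv s => fst pv * f (snd pv) + s) 0 d.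

Definition pure_decomp (x : vec3) (d : list (R * vec3)) : Prop :=
  (forall pv, In pv d -> 0 < fst pv /\ is_pure (snd pv)) /\
  wsum d = 1 /\ bary d = x.

Definition in_hull (d : list (R * vec3)) (y : vec3) : Prop :=
  exists w : list R, length w = length d /\ Forall (fun a => 0 <= a) w /\
    fold_right Rplus 0 w = 1 /\
    bary (combine w (map snd d)) = y.

Definition continuous_on_Omega (f : vec3 -> R) : Prop :=
  forall x, in_Omega x -> forall eps, 0 < eps -> exists delta, 0 < delta /\
    forall y, in_Omega y -> norm2 (vadd y (vscale (-1) x)) < delta * delta ->
      Rabs (f y - f x) < eps.

Definition convex_on_Omega (f : vec3 -> R) : Prop :=
  forall x y t, in_Omega x -> in_Omega y -> 0 <= t <= 1 ->
    f (vadd (vscale t x) (vscale (1 - t) y)) <= t * f x + (1 - t) * f y.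

Definition convex_roof (f : vec3 -> R) : Prop :=
  continuous_on_Omega f /\ convex_on_Omega f /\
  forall x, in_Omega x -> exists d, pure_decomp x d /\ f x = favg f d.

Definition flat_roof (f : vec3 -> R) : Prop :=
  convex_roof f /\
  forall x, in_Omega x -> exists d, pure_decomp x d /\ f x = favg f d /\
    forall y, in_hull d y -> f y = f x.

(* Main.v *)
Require Import Defs.
From Stdlib Require Import Reals List Lra Lia Psatz.
Import ListNotations.
Open Scope R_scope.

Lemma qform_ext Q X Y : (forall i, (i<4)%nat -> X i = Y i) -> qform Q X = qform Q Y.
Proof. intros H. unfold qform. simpl. rewrite (H 0%nat), (H 1%nat), (H 2%nat), (H 3%nat) by lia. reflexivity. Qed.

Definition bil (Q:mat4) (X Y : vec4) := sum_f_R0 (fun i => sum_f_R0 (fun j => X i * Q i j * Y j + Y i * Q i j * X j) 3) 3.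

Lemma qexp Q X Y s : qform Q (fun i => X i + s * Y i) = qform Q X + s * bil Q X Y + s*s*qform Q Y.
Proof. unfold qform, bil. simpl. ring. Qed.

Lemma qhom Q X s : qform Q (fun i => s * X i) = s*s*qform Q X.
Proof. unfold qform; simpl; ring. Qed.

Lemma disc a b c : 0 <= c -> (forall s, 0 <= a + s*b + s*s*c) -> b*b <= 4*a*c.
Proof.
  intros Hc H. destruct (Rle_lt_or_eq_dec _ _ Hc) as [Hc'|Hc'].
  - specialize (H (- b / (2*c))).
    assert (E: 4*c*(a + (-b/(2*c))*b + (-b/(2*c))*(-b/(2*c))*c) = 4*a*c - b*b) by (field; lra).
    nra.
  - subst c. destruct (Req_dec b 0) as [->|Hb]. nra.
    specialize (H (-(a+1)/b)).
    assert (E: (-(a+1)/b)*b = -(a+1)) by (field; auto). nra.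
Qed.

Lemma CS Q (Hpsd : psd4 Q) X Y : bil Q X Y * bil Q X Y <= 4 * qform Q X * qform Q Y.
Proof. apply disc. apply Hpsd. intros s. rewrite <- qexp. apply Hpsd. Qed.

Lemma tri Q (Hpsd : psd4 Q) X Y : sqrt (qform Q (fun i => X i + Y i)) <= sqrt (qform Q X) + sqrt (qform Q Y).
Proof.
  assert (E: qform Q (fun i => X i + Y i) = qform Q X + 1 * bil Q X Y + 1*1*qform Q Y).
  { rewrite <- qexp. apply qform_ext. intros; ring. }
  rewrite E. pose proof (CS Q Hpsd X Y). pose proof (Hpsd X) as HX; pose proof (Hpsd Y) as HY.
  pose proof (sqrt_pos (qform Q X)); pose proof (sqrt_pos (qform Q Y)).
  pose proof (sqrt_sqrt _ HX) as SX; pose proof (sqrt_sqrt _ HY) as SY.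
  rewrite <- (sqrt_square (sqrt (qform Q X) + sqrt (qform Q Y))) by lra.
  apply sqrt_le_1_alt.
  set (b := bil Q X Y) in *. set (sx := sqrt (qform Q X)) in *. set (sy := sqrt (qform Q Y)) in *.
  assert (b <= 2*sx*sy).
  { destruct (Rle_or_lt b (2*sx*sy)); auto.
    assert (0 <= sx*sy) by nra.
    assert (b*b > 4*(sx*sy)*(sx*sy)) by nra.
    rewrite <- SX, <- SY in H. nra. }
  nra.
Qed.

Lemma qker Q (Hsym : symmetric4 Q) n (Hk : in_kernel Q n) X t :
  qform Q (fun i => X i + t * n i) = qform Q X.
Proof.
  rewrite qexp.
  pose proof (Hk 0%nat ltac:(lia)) as K0. pose proof (Hk 1%nat ltac:(lia)) as K1.
  pose proof (Hk 2%nat ltac:(lia)) as K2. pose proof (Hk 3%nat ltac:(lia)) as K3.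
  assert (E1: bil Q X n = 2*(X 0%nat * matvec Q n 0 + X 1%nat * matvec Q n 1 + X 2%nat * matvec Q n 2 + X 3%nat * matvec Q n 3)).
  { unfold bil, matvec; simpl.
    rewrite (Hsym 1%nat 0%nat), (Hsym 2%nat 0%nat), (Hsym 3%nat 0%nat), (Hsym 2%nat 1%nat), (Hsym 3%nat 1%nat), (Hsym 3%nat 2%nat) by lia.
    ring. }
  assert (E2: qform Q n = n 0%nat * matvec Q n 0 + n 1%nat * matvec Q n 1 + n 2%nat * matvec Q n 2 + n 3%nat * matvec Q n 3).
  { unfold qform, matvec; simpl. ring. }
  rewrite E1, E2, K0, K1, K2, K3. ring.
Qed.

Lemma sqrt_hom Q (Hpsd : psd4 Q) X s : 0 <= s -> sqrt (qform Q (fun i => s * X i)) = s * sqrt (qform Q X).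
Proof.
  intros Hs. rewrite qhom. rewrite sqrt_mult_alt by nra. rewrite sqrt_square by lra. reflexivity.
Qed.

Definition fQ (Q : mat4) (x : vec3) := sqrt (qform Q (lift4 x)).

Lemma convex_f Q (Hpsd : psd4 Q) : convex_on_Omega (fQ Q).
Proof.
  intros x y t Hx Hy Ht. unfold fQ.
  rewrite (qform_ext Q _ (fun i => (fun i => t * lift4 x i) i + (fun i => (1-t) * lift4 y i) i)).
  2:{ intros i Hi. destruct i as [|[|[|[|i]]]]; try lia; unfold lift4, mk4, vadd, vscale, v1, v2, v3 in *; simpl in *; try unfold D; simpl; ring. }
  eapply Rle_trans. apply (tri Q Hpsd (fun i => t * lift4 x i) (fun i => (1-t) * lift4 y i)).
  rewrite !(sqrt_hom Q Hpsd) by lra. lra.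
Qed.

Lemma term_bound a b c N : a*a <= N -> b*b <= N -> a*c*b <= Rabs c * N.
Proof.
  intros Ha Hb. assert (a*b <= N) by nra. assert (-(a*b) <= N) by nra.
  destruct (Rcase_abs c) as [Hc|Hc].
  - rewrite Rabs_left by lra. nra.
  - rewrite Rabs_right by lra. nra.
Qed.

Lemma qbound Q (Hpsd : psd4 Q) a b c :
  qform Q (mk4 0 a b c) <= (Rabs (Q 1%nat 1%nat) + Rabs (Q 1%nat 2%nat) + Rabs (Q 1%nat 3%nat)
   + Rabs (Q 2%nat 1%nat) + Rabs (Q 2%nat 2%nat) + Rabs (Q 2%nat 3%nat)
   + Rabs (Q 3%nat 1%nat) + Rabs (Q 3%nat 2%nat) + Rabs (Q 3%nat 3%nat)) * (a*a+b*b+c*c).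
Proof.
  unfold qform; simpl.
  set (N := a*a+b*b+c*c).
  assert (Ha: a*a <= N) by (unfold N; nra).
  assert (Hb: b*b <= N) by (unfold N; nra).
  assert (Hc: c*c <= N) by (unfold N; nra).
  pose proof (term_bound a a (Q 1%nat 1%nat) N Ha Ha).
  pose proof (term_bound a b (Q 1%nat 2%nat) N Ha Hb).
  pose proof (term_bound a c (Q 1%nat 3%nat) N Ha Hc).
  pose proof (term_bound b a (Q 2%nat 1%nat) N Hb Ha).
  pose proof (term_bound b b (Q 2%nat 2%nat) N Hb Hb).
  pose proof (term_bound b c (Q 2%nat 3%nat) N Hb Hc).
  pose proof (term_bound c a (Q 3%nat 1%nat) N Hc Ha).
  pose proof (term_bound c b (Q 3%nat 2%nat) N Hc Hb).
  pose proof (term_bound c c (Q 3%nat 3%nat) N Hc Hc).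
  lra.
Qed.

Lemma cont_f Q (Hpsd : psd4 Q) : continuous_on_Omega (fQ Q).
Proof.
  intros x Hx eps Heps.
  set (C := 1 + (Rabs (Q 1%nat 1%nat) + Rabs (Q 1%nat 2%nat) + Rabs (Q 1%nat 3%nat)
   + Rabs (Q 2%nat 1%nat) + Rabs (Q 2%nat 2%nat) + Rabs (Q 2%nat 3%nat)
   + Rabs (Q 3%nat 1%nat) + Rabs (Q 3%nat 2%nat) + Rabs (Q 3%nat 3%nat))).
  assert (HC: 1 <= C).
  { unfold C. pose proof (Rabs_pos (Q 1%nat 1%nat)). pose proof (Rabs_pos (Q 1%nat 2%nat)).
    pose proof (Rabs_pos (Q 1%nat 3%nat)). pose proof (Rabs_pos (Q 2%nat 1%nat)).
    pose proof (Rabs_pos (Q 2%nat 2%nat)). pose proof (Rabs_pos (Q 2%nat 3%nat)).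
    pose proof (Rabs_pos (Q 3%nat 1%nat)). pose proof (Rabs_pos (Q 3%nat 2%nat)).
    pose proof (Rabs_pos (Q 3%nat 3%nat)). lra. }
  exists (eps / C). split. apply Rdiv_lt_0_compat; lra.
  intros y Hy Hd. unfold fQ.
  set (D := mk4 0 (v1 y - v1 x) (v2 y - v2 x) (v3 y - v3 x)).
  assert (T1: sqrt (qform Q (lift4 y)) <= sqrt (qform Q (lift4 x)) + sqrt (qform Q D)).
  { rewrite (qform_ext Q (lift4 y) (fun i => lift4 x i + D i)). apply tri; auto.
    intros i Hi. destruct i as [|[|[|[|i]]]]; try lia; unfold lift4, mk4, vadd, vscale, v1, v2, v3 in *; simpl in *; try unfold D; simpl; ring. }
  assert (T2: sqrt (qform Q (lift4 x)) <= sqrt (qform Q (lift4 y)) + sqrt (qform Q D)).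
  { rewrite (qform_ext Q (lift4 x) (fun i => lift4 y i + (fun i => (-1) * D i) i)).
    eapply Rle_trans. apply tri; auto. rewrite qhom. right. f_equal. f_equal. ring.
    intros i Hi. destruct i as [|[|[|[|i]]]]; try lia; unfold lift4, mk4, vadd, vscale, v1, v2, v3 in *; simpl in *; try unfold D; simpl; ring. }
  assert (B: qform Q D < eps * eps).
  { pose proof (qbound Q Hpsd (v1 y - v1 x) (v2 y - v2 x) (v3 y - v3 x)) as QB.
    fold D in QB.
    set (N := (v1 y - v1 x) * (v1 y - v1 x) + (v2 y - v2 x) * (v2 y - v2 x) + (v3 y - v3 x) * (v3 y - v3 x)) in QB.
    assert (EN: N = norm2 (vadd y (vscale (-1) x))) by (unfold N, norm2, vadd, vscale, v1, v2, v3; simpl; ring).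
    rewrite EN in QB. 
    assert (HN0: 0 <= norm2 (vadd y (vscale (-1) x))) by (unfold norm2; nra).
    set (M := norm2 (vadd y (vscale (-1) x))) in *.
    assert (C * M < C * (eps / C * (eps / C))) by nra.
    assert (E: C * (eps / C * (eps / C)) = eps * eps / C) by (field; lra).
    assert (eps * eps / C <= eps * eps).
    { unfold Rdiv. rewrite <- (Rmult_1_r (eps*eps)) at 2. apply Rmult_le_compat_l. nra.
      rewrite <- Rinv_1. apply Rinv_le_contravar; lra. }
    unfold C in *. lra. }
  assert (S: sqrt (qform Q D) < eps).
  { rewrite <- (sqrt_square eps) by lra. apply sqrt_lt_1_alt. split; auto. }
  apply Rabs_def1; lra.
Qed.

Lemma vec3_eq a b : v1 a = v1 b -> v2 a = v2 b -> v3 a = v3 b -> a = b.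
Proof. destruct a as [[a1 a2] a3], b as [[b1 b2] b3]; unfold v1, v2, v3; simpl. intros; subst; auto. Qed.

Lemma pf_scale Q (Hpsd : psd4 Q) p u : 0 < p ->
  p * fQ Q (vscale (/p) u) = sqrt (qform Q (mk4 p (v1 u) (v2 u) (v3 u))).
Proof.
  intros Hp. unfold fQ. rewrite <- (sqrt_hom Q Hpsd) by lra. f_equal. apply qform_ext.
  intros i Hi. destruct i as [|[|[|[|i]]]]; try lia; unfold lift4, mk4, vscale, v1, v2, v3; simpl; field; lra.
Qed.

Lemma decomp2 Q (Hpsd : psd4 Q) x p1 p2 u1 u2 :
  0 < p1 -> 0 < p2 -> p1 + p2 = 1 -> norm2 u1 = p1*p1 -> norm2 u2 = p2*p2 -> vadd u1 u2 = x ->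
  pure_decomp x [(p1, vscale (/p1) u1); (p2, vscale (/p2) u2)] /\
  favg (fQ Q) [(p1, vscale (/p1) u1); (p2, vscale (/p2) u2)] =
    sqrt (qform Q (mk4 p1 (v1 u1) (v2 u1) (v3 u1))) + sqrt (qform Q (mk4 p2 (v1 u2) (v2 u2) (v3 u2))).
Proof.
  intros H1 H2 Hs Hn1 Hn2 Hx.
  assert (Pn: forall p u, 0 < p -> norm2 u = p*p -> is_pure (vscale (/p) u)).
  { intros p u Hp Hn. unfold is_pure.
    replace (norm2 (vscale (/p) u)) with (/p * /p * norm2 u) by (unfold norm2, vscale, v1, v2, v3; simpl; ring).
    rewrite Hn. field. lra. }
  split; [split; [|split]|].
  - intros pv [<-|[<-|[]]]; simpl; split; auto.
  - simpl. lra.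
  - subst x. apply vec3_eq; unfold bary, vadd, vscale, vzero, v1, v2, v3; simpl; field; lra.
  - simpl. rewrite (pf_scale Q Hpsd p1), (pf_scale Q Hpsd p2) by lra. ring.
Qed.

Lemma hull1 p y1 y : in_hull [(p,y1)] y -> y = y1.
Proof.
  intros [w [Hl [Hf [Hs Hb]]]]. destruct w as [|w1 [|w2 w]]; simpl in Hl; try lia.
  simpl in Hs, Hb. subst y. assert (w1 = 1) by lra. subst.
  apply vec3_eq; unfold vadd, vscale, vzero, v1, v2, v3; simpl; ring.
Qed.

Lemma hull2 p1 p2 y1 y2 y : in_hull [(p1,y1);(p2,y2)] y ->
  exists w, y = vadd (vscale w y1) (vscale (1-w) y2).
Proof.
  intros [w [Hl [Hf [Hs Hb]]]]. destruct w as [|w1 [|w2 [|w3 w]]]; simpl in Hl; try lia.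
  simpl in Hs, Hb. subst y. exists w1. assert (w2 = 1 - w1) by lra. subst.
  apply vec3_eq; unfold vadd, vscale, vzero, v1, v2, v3; simpl; ring.
Qed.

Lemma sign_lemma x1 x2 x3 z0 z1 z2 z3 : x1*x1+x2*x2+x3*x3 < 1 ->
  z0*z0 = z1*z1+z2*z2+z3*z3 -> 0 < z0 - (x1*z1 + x2*z2 + x3*z3) -> 0 < z0.
Proof.
  intros Hx Hz Hp.
  assert (CSI: (x1*z1+x2*z2+x3*z3)*(x1*z1+x2*z2+x3*z3) <= (x1*x1+x2*x2+x3*x3)*(z1*z1+z2*z2+z3*z3)).
  { assert (L: (x1*x1+x2*x2+x3*x3)*(z1*z1+z2*z2+z3*z3) - (x1*z1+x2*z2+x3*z3)*(x1*z1+x2*z2+x3*z3)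
       = (x1*z2-x2*z1)*(x1*z2-x2*z1) + (x1*z3-x3*z1)*(x1*z3-x3*z1) + (x2*z3-x3*z2)*(x2*z3-x3*z2)) by ring.
    assert (SQ: forall t, 0 <= t*t) by (intros; nra).
    pose proof (SQ (x1*z2-x2*z1)); pose proof (SQ (x1*z3-x3*z1)); pose proof (SQ (x2*z3-x3*z2)). lra. }
  destruct (Rlt_or_le 0 z0) as [|Hz0]; auto. exfalso.
  set (p := x1*z1+x2*z2+x3*z3) in *.
  assert (p*p > z0*z0) by nra.
  assert (0 <= z1*z1+z2*z2+z3*z3) by nra.
  nra.
Qed.

Lemma roof_decomp Q (Hsym : symmetric4 Q) (Hpsd : psd4 Q) n (Hnz : nonzero4 n)
  (Hk : in_kernel Q n) (Hm : minkowski n n <= 0) x (Hx : in_Omega x) :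
  exists d, pure_decomp x d /\ fQ Q x = favg (fQ Q) d /\
    (n 0%nat = 0 -> forall y, in_hull d y -> fQ Q y = fQ Q x).
Proof.
  assert (Hnz': 0 < n 0%nat * n 0%nat + n 1%nat * n 1%nat + n 2%nat * n 2%nat + n 3%nat * n 3%nat).
  { destruct Hnz as [i [Hi Hni]]. destruct i as [|[|[|[|i]]]]; try lia; nra. }
  destruct (Req_dec (norm2 x) 1) as [Hp|Hnp].
  { exists [(1, x)]. split; [split; [|split]|split].
    - intros pv [<-|[]]; simpl; split; [lra|exact Hp].
    - simpl; lra.
    - apply vec3_eq; unfold bary, vadd, vscale, vzero, v1, v2, v3; simpl; ring.
    - simpl; ring.
    - intros _ y Hy. apply hull1 in Hy. subst; reflexivity. }
  assert (Hlt: norm2 x < 1) by (unfold in_Omega in Hx; lra).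
  destruct x as [[x1 x2] x3]. unfold norm2, v1, v2, v3 in Hlt; simpl in Hlt.
  unfold minkowski in Hm.
  set (n0 := n 0%nat) in *. set (n1 := n 1%nat) in *. set (n2 := n 2%nat) in *. set (n3 := n 3%nat) in *.
  set (A := 1 - (x1*x1+x2*x2+x3*x3)).
  set (B := n0 - (x1*n1+x2*n2+x3*n3)).
  set (C := n0*n0 - n1*n1 - n2*n2 - n3*n3) in Hm.
  assert (HA: 0 < A) by (unfold A; lra).
  assert (KX: forall (c t : R), qform Q (fun i => c * lift4 ((x1,x2),x3) i + t * n i) = c * c * fQ Q ((x1,x2),x3) * fQ Q ((x1,x2),x3)).
  { intros c t. rewrite (qker Q Hsym n Hk (fun i => c * lift4 ((x1,x2),x3) i)). rewrite qhom.
    unfold fQ. rewrite (Rmult_assoc (c*c)), sqrt_sqrt; auto. }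
  assert (Hf0: 0 <= fQ Q ((x1,x2),x3)) by apply sqrt_pos.
  assert (KX': forall (c t : R), 0 <= c -> sqrt (qform Q (fun i => c * lift4 ((x1,x2),x3) i + t * n i)) = c * fQ Q ((x1,x2),x3)).
  { intros c t Hc. rewrite KX. replace (c * c * fQ Q ((x1,x2),x3) * fQ Q ((x1,x2),x3)) with ((c * fQ Q ((x1,x2),x3)) * (c * fQ Q ((x1,x2),x3))) by ring.
    apply sqrt_square. nra. }
  destruct (Rlt_or_le C 0) as [HC|HC].
  -
    assert (HD0: 0 <= B*B - A*C) by nra.
    set (D := sqrt (B*B - A*C)).
    assert (HDD: D*D = B*B - A*C) by (apply sqrt_sqrt; auto).
    assert (HD: 0 < D).
    { pose proof (sqrt_pos (B*B - A*C)). fold D in H. destruct (Rle_lt_or_eq_dec _ _ H); auto. nra. }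
    assert (HDB1: 0 < D + B) by nra.
    assert (HDB2: 0 < D - B) by nra.
    set (a := (D+B)/(2*D)). set (b := (D-B)/(2*D)). set (s := A/(2*D)).
    assert (Ha: 2*D*a = D+B) by (unfold a; field; lra).
    assert (Hb: 2*D*b = D-B) by (unfold b; field; lra).
    assert (Hs: 2*D*s = A) by (unfold s; field; lra).
    assert (Ha0: 0 < a) by (unfold a; apply Rdiv_lt_0_compat; lra).
    assert (Hb0: 0 < b) by (unfold b; apply Rdiv_lt_0_compat; lra).
    assert (Hab: a + b = 1) by (unfold a, b; field; lra).
    set (p1 := a - s*n0). set (u1 := (a*x1 - s*n1, a*x2 - s*n2, a*x3 - s*n3)).
    set (p2 := b + s*n0). set (u2 := (b*x1 + s*n1, b*x2 + s*n2, b*x3 + s*n3)).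
    assert (L1: p1*p1 = norm2 u1).
    { assert (E: 4*(D*D)*(p1*p1 - norm2 u1) = A*(D*D - B*B + A*C)).
      { transitivity ((2*D*a)*(2*D*a)*A - 2*(2*D*a)*(2*D*s)*B + (2*D*s)*(2*D*s)*C).
        unfold p1, u1, norm2, v1, v2, v3, A, B, C; simpl; ring.
        rewrite Ha, Hs. ring. }
      assert (Z: A*(D*D - B*B + A*C) = 0) by (rewrite HDD; ring).
      assert (p1*p1 - norm2 u1 = 0); [|lra].
      assert (4*(D*D) <> 0) by nra. apply (Rmult_eq_reg_l (4*(D*D))); auto. rewrite E, Z. ring. }
    assert (L2: p2*p2 = norm2 u2).
    { assert (E: 4*(D*D)*(p2*p2 - norm2 u2) = A*(D*D - B*B + A*C)).
      { transitivity ((2*D*b)*(2*D*b)*A + 2*(2*D*b)*(2*D*s)*B + (2*D*s)*(2*D*s)*C).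
        unfold p2, u2, norm2, v1, v2, v3, A, B, C; simpl; ring.
        rewrite Hb, Hs. ring. }
      assert (Z: A*(D*D - B*B + A*C) = 0) by (rewrite HDD; ring).
      assert (p2*p2 - norm2 u2 = 0); [|lra].
      assert (4*(D*D) <> 0) by nra. apply (Rmult_eq_reg_l (4*(D*D))); auto. rewrite E, Z. ring. }
    assert (P1: 0 < p1).
    { apply (sign_lemma x1 x2 x3 p1 (a*x1 - s*n1) (a*x2 - s*n2) (a*x3 - s*n3)); auto.
      assert (E: 2*D*(p1 - (x1 * (a * x1 - s * n1) + x2 * (a * x2 - s * n2) + x3 * (a * x3 - s * n3))) = (2*D*a)*A - (2*D*s)*B)
        by (unfold p1, A, B; ring).
      rewrite Ha, Hs in E. assert (E2: (D + B) * A - A * B = D*A) by ring. rewrite E2 in E.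
      assert (E3: p1 - (x1 * (a * x1 - s * n1) + x2 * (a * x2 - s * n2) + x3 * (a * x3 - s * n3)) = A/2).
      { apply (Rmult_eq_reg_l (2*D)); [|lra]. rewrite E. field. }
      rewrite E3; lra. }
    assert (P2: 0 < p2).
    { apply (sign_lemma x1 x2 x3 p2 (b*x1 + s*n1) (b*x2 + s*n2) (b*x3 + s*n3)); auto.
      assert (E: 2*D*(p2 - (x1 * (b * x1 + s * n1) + x2 * (b * x2 + s * n2) + x3 * (b * x3 + s * n3))) = (2*D*b)*A + (2*D*s)*B)
        by (unfold p2, A, B; ring).
      rewrite Hb, Hs in E. assert (E2: (D - B) * A + A * B = D*A) by ring. rewrite E2 in E.
      assert (E3: p2 - (x1 * (b * x1 + s * n1) + x2 * (b * x2 + s * n2) + x3 * (b * x3 + s * n3)) = A/2).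
      { apply (Rmult_eq_reg_l (2*D)); [|lra]. rewrite E. field. }
      rewrite E3; lra. }
    assert (Hsum: p1 + p2 = 1) by (unfold p1, p2; try rewrite <- Hab; ring).
    assert (Hv: vadd u1 u2 = ((x1,x2),x3)) by (apply vec3_eq; unfold u1, u2, vadd, v1, v2, v3; simpl; try replace b with (1-a) by lra; ring).
    destruct (decomp2 Q Hpsd ((x1,x2),x3) p1 p2 u1 u2 P1 P2 Hsum (eq_sym L1) (eq_sym L2) Hv) as [PD FA].
    exists [(p1, vscale (/p1) u1); (p2, vscale (/p2) u2)]. split; [exact PD|split].
    + rewrite FA.
      rewrite (qform_ext Q _ (fun i => a * lift4 ((x1,x2),x3) i + (-s) * n i)).
      2:{ intros i Hi. destruct i as [|[|[|[|i]]]]; try lia; unfold lift4, mk4, u1, p1, v1, v2, v3; simpl; fold n0 n1 n2 n3; ring. }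
      rewrite (qform_ext Q (mk4 p2 _ _ _) (fun i => b * lift4 ((x1,x2),x3) i + s * n i)).
      2:{ intros i Hi. destruct i as [|[|[|[|i]]]]; try lia; unfold lift4, mk4, u2, p2, v1, v2, v3; simpl; fold n0 n1 n2 n3; ring. }
      rewrite !KX' by lra. rewrite <- Rmult_plus_distr_r, Hab. ring.
    + intros Hn0 y Hy. apply hull2 in Hy. destruct Hy as [w ->].
      fold n0 in Hn0.
      assert (Hp1: p1 = a) by (unfold p1; rewrite Hn0; ring).
      assert (Hp2: p2 = b) by (unfold p2; rewrite Hn0; ring).
      unfold fQ.
      rewrite (qform_ext Q _ (fun i => 1 * lift4 ((x1,x2),x3) i + (w*(-s/a) + (1-w)*(s/b)) * n i)).
      2:{ intros i Hi. rewrite Hp1, Hp2.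
          destruct i as [|[|[|[|i]]]]; try lia; unfold lift4, mk4, u1, u2, vadd, vscale, v1, v2, v3; simpl; fold n0 n1 n2 n3.
          rewrite Hn0; ring. all: field; lra. }
      rewrite KX' by lra. unfold fQ. ring.
  -
    assert (HC0: C = 0) by lra.
    assert (HB: B <> 0).
    { intro HB0. unfold B in HB0. unfold C in HC0.
      assert (CSI: (x1*n1+x2*n2+x3*n3)*(x1*n1+x2*n2+x3*n3) <= (x1*x1+x2*x2+x3*x3)*(n1*n1+n2*n2+n3*n3)).
      { assert (L: (x1*x1+x2*x2+x3*x3)*(n1*n1+n2*n2+n3*n3) - (x1*n1+x2*n2+x3*n3)*(x1*n1+x2*n2+x3*n3)
          = (x1*n2-x2*n1)*(x1*n2-x2*n1) + (x1*n3-x3*n1)*(x1*n3-x3*n1) + (x2*n3-x3*n2)*(x2*n3-x3*n2)) by ring.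
        assert (SQ: forall t, 0 <= t*t) by (intros; nra).
        pose proof (SQ (x1*n2-x2*n1)); pose proof (SQ (x1*n3-x3*n1)); pose proof (SQ (x2*n3-x3*n2)). lra. }
      assert (n0 = x1*n1+x2*n2+x3*n3) by lra.
      assert (Hnn: 0 < n1*n1+n2*n2+n3*n3) by nra.
      assert (0 <= x1*x1+x2*x2+x3*x3) by nra.
      nra. }
    set (s := A/(2*B)).
    assert (Hs: 2*B*s = A) by (unfold s; field; auto).
    set (p1 := 1 - s*n0). set (u1 := (x1 - s*n1, x2 - s*n2, x3 - s*n3)).
    set (p2 := s*n0). set (u2 := (s*n1, s*n2, s*n3)).
    assert (L1: p1*p1 = norm2 u1).
    { assert (E: p1*p1 - norm2 u1 = A - (2*B*s) + s*s*C) by (unfold p1, u1, norm2, v1, v2, v3, A, B, C; simpl; ring).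
      rewrite Hs, HC0 in E. lra. }
    assert (L2: p2*p2 = norm2 u2).
    { assert (E: p2*p2 - norm2 u2 = s*s*C) by (unfold p2, u2, norm2, v1, v2, v3, C; simpl; ring).
      rewrite HC0 in E. lra. }
    assert (P1: 0 < p1).
    { apply (sign_lemma x1 x2 x3 p1 (x1 - s*n1) (x2 - s*n2) (x3 - s*n3)); auto.
      assert (E: p1 - (x1 * (x1 - s * n1) + x2 * (x2 - s * n2) + x3 * (x3 - s * n3)) = A - (2*B*s)/2)
        by (unfold p1, A, B; field).
      rewrite E, Hs. lra. }
    assert (P2: 0 < p2).
    { apply (sign_lemma x1 x2 x3 p2 (s*n1) (s*n2) (s*n3)); auto.
      assert (E: p2 - (x1 * (s * n1) + x2 * (s * n2) + x3 * (s * n3)) = (2*B*s)/2)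
        by (unfold p2, B; field).
      rewrite E, Hs. lra. }
    assert (Hsum: p1 + p2 = 1) by (unfold p1, p2; try rewrite <- Hab; ring).
    assert (Hv: vadd u1 u2 = ((x1,x2),x3)) by (apply vec3_eq; unfold u1, u2, vadd, v1, v2, v3; simpl; try replace b with (1-a) by lra; ring).
    destruct (decomp2 Q Hpsd ((x1,x2),x3) p1 p2 u1 u2 P1 P2 Hsum (eq_sym L1) (eq_sym L2) Hv) as [PD FA].
    exists [(p1, vscale (/p1) u1); (p2, vscale (/p2) u2)]. split; [exact PD|split].
    + rewrite FA.
      rewrite (qform_ext Q _ (fun i => 1 * lift4 ((x1,x2),x3) i + (-s) * n i)).
      2:{ intros i Hi. destruct i as [|[|[|[|i]]]]; try lia; unfold lift4, mk4, u1, p1, v1, v2, v3; simpl; fold n0 n1 n2 n3; ring. }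
      rewrite (qform_ext Q (mk4 p2 _ _ _) (fun i => 0 * lift4 ((x1,x2),x3) i + s * n i)).
      2:{ intros i Hi. destruct i as [|[|[|[|i]]]]; try lia; unfold lift4, mk4, u2, p2, v1, v2, v3; simpl; fold n0 n1 n2 n3; ring. }
      rewrite !KX' by lra. ring.
    + intros Hn0. exfalso. fold n0 in Hn0. unfold C in HC0. rewrite Hn0 in HC0. nra.
Qed.

Theorem theorem2 (Q : mat4)
  (Hsym : symmetric4 Q) (Hpsd : psd4 Q) (Hdeg : degenerate4 Q)
  (Hn : exists n : vec4, nonzero4 n /\ in_kernel Q n /\ minkowski n n <= 0) :
  let f := fun x : vec3 => sqrt (qform Q (lift4 x)) in
  convex_roof f /\
  ((exists n : vec4, nonzero4 n /\ in_kernel Q n /\ n 0%nat = 0) -> flat_roof f).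
Proof.
  intros f. change f with (fQ Q).
  assert (CR: convex_roof (fQ Q)).
  { split; [apply cont_f; auto|split; [apply convex_f; auto|]].
    intros x Hx. destruct Hn as [n [Hnz [Hk Hm]]].
    destruct (roof_decomp Q Hsym Hpsd n Hnz Hk Hm x Hx) as [d [Hd [Hf _]]].
    exists d; auto. }
  split; auto.
  intros [n [Hnz [Hk Hn0]]]. split; auto.
  assert (Hm: minkowski n n <= 0).
  { unfold minkowski. rewrite Hn0. nra. }
  intros x Hx.
  destruct (roof_decomp Q Hsym Hpsd n Hnz Hk Hm x Hx) as [d [Hd [Hf Hh]]].
  exists d; auto.
Qed.
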